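(* Let $\mathcal{H}$ be a finite-dimensional real Hilbert space, let $A\colon \mathcal{H}\rightrightarrows\mathcal{H}$ be maximally monotone, let $B\colon \mathcal{H}\to\mathcal{H}$ be monotone and locally Lipschitz continuous, and suppose $(A+B)^{-1}(0)\neq\varnothing$. Fix $\delta\in(0,1)$, $\sigma\in(0,1)$, initial points $x_0,x_{-1}\in\mathcal{H}$ and an initial stepsize $\lambda_{-1}>0$. For $k=0,1,2,\dots$, having $x_k$, $x_{k-1}$ and $\lambda_{k-1}$, choose $\rho_k\in\{1,\sigma^{-1}\}$, set $\lambda_k=\rho_k\lambda_{k-1}\sigma^{i}$ where $i$ is the smallest nonnegative integer such that the point $$x_{k+1} := J_{\lambda_k A}\bigl(x_k - \lambda_k B(x_k) - \lambda_{k-1}(B(x_k)-B(x_{k-1}))\bigr)$$ satisfies $\lambda_k\|B(x_{k+1})-B(x_k)\|\leq \frac{\delta}{2}\|x_{k+1}-x_k\|$, and define $x_{k+1}$ accordingly. Then the sequence $(x_k)$ so generated converges to a point contained in $(A+B)^{-1}(0)$.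
   Context: $J_{\lambda A}:=(I+\lambda A)^{-1}$ denotes the resolvent of $\lambda A$. $B$ is locally Lipschitz if every point has a neighbourhood on which $B$ is Lipschitz. *)

(* Defs.v *)
From HB Require Import structures.
From mathcomp Require Import all_boot all_order all_algebra.
From mathcomp Require Import all_classical all_reals all_analysis.
Set Implicit Arguments. Unset Strict Implicit. Unset Printing Implicit Defensive.
Import Order.TTheory GRing.Theory Num.Theory.
Import numFieldNormedType.Exports.
Local Open Scope classical_set_scope.
Local Open Scope ring_scope.

(* The finite-dimensional real Hilbert space H is modelled as 'rV[R]_n
   (R : realType) with the standard Euclidean inner product. *)
Definition ip (R : realType) (n : nat) (u v : 'rV[R]_n) : R := (u *m v^T) 0 0.
Definition enorm (R : realType) (n : nat) (u : 'rV[R]_n) : R := Num.sqrt (ip u u).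

Definition monotone_op (R : realType) (n : nat) (A : 'rV[R]_n -> set 'rV[R]_n) :=
  forall x y u v, A x u -> A y v -> 0 <= ip (x - y) (u - v).

Definition maximally_monotone (R : realType) (n : nat) (A : 'rV[R]_n -> set 'rV[R]_n) :=
  monotone_op A /\
  forall A' : 'rV[R]_n -> set 'rV[R]_n, monotone_op A' ->
    (forall x, A x `<=` A' x) -> A' = A.

Definition monotone_fun (R : realType) (n : nat) (B : 'rV[R]_n -> 'rV[R]_n) :=
  forall x y, 0 <= ip (x - y) (B x - B y).

Definition locally_lipschitz (R : realType) (n : nat) (B : 'rV[R]_n -> 'rV[R]_n) :=
  forall x : 'rV[R]_n, exists2 N : set 'rV[R]_n, nbhs x N &
    exists L : R, forall y z, N y -> N z -> enorm (B y - B z) <= L * enorm (y - z).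

Definition zeros_sum (R : realType) (n : nat) (A : 'rV[R]_n -> set 'rV[R]_n)
  (B : 'rV[R]_n -> 'rV[R]_n) : set 'rV[R]_n :=
  [set x | exists2 u, A x u & u + B x = 0].

(* Resolvent J_{lam A} = (I + lam A)^{-1}: x = J z iff z ∈ x + lam A x.
   Defined as a function through classical choice (it is single-valued and
   everywhere defined for maximally monotone A, lam > 0, by Minty). *)
Definition resolvent (R : realType) (n : nat) (A : 'rV[R]_n -> set 'rV[R]_n)
  (lam : R) (z : 'rV[R]_n) : 'rV[R]_n :=
  xget 0 [set x | exists2 u, A x u & z = x + lam *: u].

(* Main.v *)
Require Import Defs.
From HB Require Import structures.
From mathcomp Require Import all_boot all_order all_algebra.
From mathcomp Require Import all_classical all_reals all_analysis.
From mathcomp Require Import ring lra.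
Set Implicit Arguments. Unset Strict Implicit. Unset Printing Implicit Defensive.
Import Order.TTheory GRing.Theory Num.Theory.
Import numFieldNormedType.Exports.
Local Open Scope classical_set_scope.
Local Open Scope ring_scope.

Section IP.
Variables (R : realType) (n : nat).
Implicit Types (u v w : 'rV[R]_n).

Lemma ipE u v : ip u v = \sum_j u ord0 j * v ord0 j.
Proof. by rewrite /ip !mxE; apply: eq_bigr => j _; rewrite mxE. Qed.

Lemma ipC u v : ip u v = ip v u.
Proof. by rewrite !ipE; apply: eq_bigr => j _; rewrite mulrC. Qed.

Lemma ipDl u v w : ip (u + v) w = ip u w + ip v w.
Proof. by rewrite !ipE -big_split; apply: eq_bigr => j _; rewrite mxE mulrDl. Qed.

Lemma ipZl a u v : ip (a *: u) v = a * ip u v.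
Proof. by rewrite !ipE mulr_sumr; apply: eq_bigr => j _; rewrite mxE mulrA. Qed.

Lemma ipNl u v : ip (- u) v = - ip u v.
Proof. by rewrite -scaleN1r ipZl mulN1r. Qed.

Lemma ipBl u v w : ip (u - v) w = ip u w - ip v w.
Proof. by rewrite ipDl ipNl. Qed.

Lemma ip0l v : ip 0 v = 0.
Proof. by rewrite -(scale0r 0) ipZl mul0r. Qed.

Lemma ipDr u v w : ip w (u + v) = ip w u + ip w v.
Proof. by rewrite ipC ipDl ![ip _ w]ipC. Qed.
Lemma ipZr a u v : ip v (a *: u) = a * ip v u.
Proof. by rewrite ipC ipZl ipC. Qed.
Lemma ipNr u v : ip v (- u) = - ip v u.
Proof. by rewrite ipC ipNl ipC. Qed.
Lemma ipBr u v w : ip w (u - v) = ip w u - ip w v.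
Proof. by rewrite ipDr ipNr. Qed.
Lemma ip0r v : ip v 0 = 0.
Proof. by rewrite ipC ip0l. Qed.

Lemma ip_suml (N : nat) (F : 'I_N -> 'rV[R]_n) v :
  ip (\sum_(i < N) F i) v = \sum_(i < N) ip (F i) v.
Proof. exact: (big_morph (fun u => ip u v) (fun a b => ipDl a b v) (ip0l v)). Qed.

Lemma ip_sumr (N : nat) (F : 'I_N -> 'rV[R]_n) v :
  ip v (\sum_(i < N) F i) = \sum_(i < N) ip v (F i).
Proof. by rewrite ipC ip_suml; apply: eq_bigr => i _; rewrite ipC. Qed.

Lemma ip_ge0 u : 0 <= ip u u.
Proof. by rewrite ipE; apply: sumr_ge0 => j _; rewrite -expr2 sqr_ge0. Qed.


Lemma ip_eq0 u : ip u u = 0 -> u = 0.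
Proof.
rewrite ipE => H; apply/rowP => j; rewrite mxE.
have := psumr_eq0P (fun i _ => (sqr_ge0 (u ord0 i) : 0 <= u ord0 i * u ord0 i)) H; move=> /(_ j isT).
by move/eqP; rewrite mulf_eq0 orbb => /eqP.
Qed.

Lemma ip_sqD u v : ip (u + v) (u + v) = ip u u + 2 * ip u v + ip v v.
Proof. rewrite ipDl !ipDr [ip v u]ipC; ring. Qed.

Lemma ip_sqB u v : ip (u - v) (u - v) = ip u u - 2 * ip u v + ip v v.
Proof. rewrite ipBl !ipBr [ip v u]ipC; ring. Qed.

Lemma enorm_ge0 u : 0 <= enorm u.
Proof. exact: sqrtr_ge0. Qed.

Lemma enorm_sq u : enorm u ^+ 2 = ip u u.
Proof. exact/sqr_sqrtr/ip_ge0. Qed.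

Lemma enorm_le_sq u c : 0 <= c -> ip u u <= c ^+ 2 -> enorm u <= c.
Proof. move=> c0; rewrite -enorm_sq => H; have := enorm_ge0 u; nra. Qed.

Lemma enorm_sq_le u c : enorm u <= c -> ip u u <= c ^+ 2.
Proof. rewrite -enorm_sq => H; have := enorm_ge0 u; nra. Qed.

Lemma enorm0 : enorm (0 : 'rV[R]_n) = 0.
Proof. by rewrite /enorm ip0l sqrtr0. Qed.

Lemma enorm_eq0 u : enorm u = 0 -> u = 0.
Proof. by move=> H; apply: ip_eq0; rewrite -enorm_sq H expr0n. Qed.

Lemma enormZ a u : enorm (a *: u) = `|a| * enorm u.
Proof.
by rewrite /enorm ipZl ipZr mulrA -expr2 sqrtrM ?sqr_ge0 // sqrtr_sqr.
Qed.

Lemma enormN u : enorm (- u) = enorm u.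
Proof. by rewrite -scaleN1r enormZ normrN1 mul1r. Qed.

Lemma enormB u v : enorm (u - v) = enorm (v - u).
Proof. by rewrite -enormN opprB. Qed.

Lemma CS u v : ip u v <= enorm u * enorm v.
Proof.
have ha := enorm_sq u; have hb := enorm_sq v.
have [a0|a0] := eqVneq (enorm u) 0.
  by rewrite (enorm_eq0 a0) ip0l enorm0 mul0r.
have [b0|b0] := eqVneq (enorm v) 0.
  by rewrite (enorm_eq0 b0) ip0r enorm0 mulr0.
have ap : 0 < enorm u by rewrite lt_def a0 enorm_ge0.
have bp : 0 < enorm v by rewrite lt_def b0 enorm_ge0.
have H := ip_ge0 (enorm v *: u - enorm u *: v).
rewrite ip_sqB !ipZl !ipZr -ha -hb in H.
have abp : 0 < enorm u * enorm v by apply: mulr_gt0.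
nra.
Qed.

Lemma CSabs u v : `|ip u v| <= enorm u * enorm v.
Proof.
rewrite ler_norml CS andbT; have := CS (- u) v; rewrite ipNl enormN; lra.
Qed.

Lemma enormD u v : enorm (u + v) <= enorm u + enorm v.
Proof.
apply: enorm_le_sq; first by rewrite addr_ge0 ?enorm_ge0.
rewrite ip_sqD -!enorm_sq; have := CS u v; nra.
Qed.

Lemma enormBD u v w : enorm (u - w) <= enorm (u - v) + enorm (v - w).
Proof. have -> : u - w = (u - v) + (v - w) by rewrite addrA subrK. exact: enormD. Qed.

Lemma coord_sq_le u j : u ord0 j ^+ 2 <= ip u u.
Proof.
rewrite ipE (bigD1 j) //= -expr2 lerDl.
apply: sumr_ge0 => i _; by rewrite -expr2 sqr_ge0.
Qed.

Lemma coord_le_enorm u j : `|u ord0 j| <= enorm u.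
Proof.
have H := coord_sq_le u j; rewrite -(real_normK (num_real (u ord0 j))) -enorm_sq in H.
have := enorm_ge0 u; have := normr_ge0 (u ord0 j); nra.
Qed.

Lemma mx_le_enorm u : `|u| <= enorm u.
Proof.
rewrite [`|u|]/Num.Def.normr /= mx_normrE; apply: bigmax_le => [|[i j] _].
  exact: enorm_ge0.
by rewrite /= (ord1 i); exact: coord_le_enorm.
Qed.

Lemma coord_le_mx u j : `|u ord0 j| <= `|u|.
Proof.
rewrite [`|u|]/Num.Def.normr /= mx_normrE.
exact: (le_bigmax _ (fun ij : 'I_1 * 'I_n => `|u ij.1 ij.2|) (ord0, j)).
Qed.

Lemma enorm_le_mx u : enorm u <= n%:R * `|u|.
Proof.
apply: enorm_le_sq; first by rewrite mulr_ge0.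
rewrite ipE; apply: le_trans (_ : \sum_(j < n) `|u| ^+ 2 <= _).
  apply: ler_sum => j _; rewrite -expr2.
  have := coord_le_mx u j; have := normr_ge0 (u ord0 j); rewrite -(real_normK (num_real (u ord0 j))); nra.
rewrite sumr_const card_ord -mulr_natl.
have hn : n%:R <= (n%:R : R) ^+ 2.
  by rewrite -natrX ler_nat; case: (n) => // m; rewrite expnS leq_pmulr.
have := normr_ge0 u; have : 0 <= (n%:R : R) by []; nra.
Qed.

End IP.
Section Top.
Variables (R : realType) (n : nat).

Lemma cont_loclip (f : 'rV[R]_n -> R) :
  (forall u, exists C, forall w, `|u - w| < 1 -> `|f u - f w| <= C * `|u - w|) ->
  continuous f.
Proof.
move=> H u; apply/(@cvgrPdist_lt _ _ _ (nbhs u) (nbhs_filter u)) => e e0.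
have [C HC] := H u.
pose d := Num.min 1 (e / (`|C| + 1)).
have d0 : 0 < d by rewrite lt_min ltr01 divr_gt0 // ltr_wpDl.
apply/nbhs_ballP; exists d => //= w.
rewrite -ball_normE /= => hw.
have hw1 : `|u - w| < 1 by apply: (lt_le_trans hw); rewrite ge_min lexx.
have hw2 : `|u - w| < e / (`|C| + 1) by apply: (lt_le_trans hw); rewrite ge_min lexx orbT.
apply: (le_lt_trans (HC w hw1)).
have hC : C <= `|C| := ler_norm C.
have : 0 <= `|u - w| := normr_ge0 _.
rewrite ltr_pdivlMr ?ltr_wpDl // in hw2.
nra.
Qed.

Lemma cluster_seq (K : set 'rV[R]_n) (x : nat -> 'rV[R]_n) N :
  compact K -> (forall k, (N <= k)%N -> K (x k)) ->
  exists2 p, K p & forall e, 0 < e -> forall M, exists2 k, (M <= k)%N & `|p - x k| < e.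
Proof.
move=> cK HK.
have FK : (x @ \oo) K by exists N => // k /= /HK.
have [p [Kp cp]] := cK _ _ FK.
exists p => // e e0 M.
have FA : (x @ \oo) (x @` [set k | (maxn N M <= k)%N]).
  by exists (maxn N M) => // k /= hk; exists k.
have Bp : nbhs p (ball p e) by apply: nbhsx_ballx.
have [y [[k /= hk <-] hb]] := cp _ _ FA Bp.
exists k; first by apply: leq_trans hk; rewrite leq_maxr.
by move: hb; rewrite -ball_normE.
Qed.


Lemma enorm_lip (a b : 'rV[R]_n) : `|enorm a - enorm b| <= enorm (a - b).
Proof.
rewrite ler_norml; have h1 := enormBD a b 0; have h2 := enormBD b a 0.
rewrite !subr0 in h1 h2; rewrite enormB in h2; lra.
Qed.

Lemma enorm_cont (c : 'rV[R]_n) : continuous (fun u : 'rV[R]_n => enorm (u - c)).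
Proof.
apply: cont_loclip => u; exists n%:R => w _.
apply: le_trans (enorm_lip _ _) _.
rewrite opprB addrA subrK; exact: enorm_le_mx.
Qed.

Lemma closed_ball_e (c : 'rV[R]_n) r : closed [set u | enorm (u - c) <= r].
Proof.
have := (continuous_closedP _).1 (enorm_cont (c:=c)) [set t : R | t <= r] (@closed_le _ r).
by apply.
Qed.

Lemma compact_ball_e (c : 'rV[R]_n) r : compact [set u | enorm (u - c) <= r].
Proof.
apply: bounded_closed_compact; last exact: closed_ball_e.
exists (r + enorm c); split; first exact: num_real.
move=> M HM u /= hu.
apply: le_trans (mx_le_enorm _) _.
apply: le_trans (ltW HM).
have := enormBD u c 0; rewrite !subr0; lra.
Qed.

End Top.
Section Sums.
Variables (R : realType) (n : nat).

Lemma enorm_sum (N : nat) (F : 'I_N -> 'rV[R]_n) :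
  enorm (\sum_i F i) <= \sum_i enorm (F i).
Proof.
elim/big_ind2 : _ => [|a b c d h1 h2|i _]; first by rewrite enorm0.
  by apply: le_trans (enormD _ _) _; exact: lerD.
exact: lexx.
Qed.

Lemma lin_bound (N : nat) (v : 'rV[R]_N) (c : 'I_N -> R) :
  `|\sum_i v ord0 i * c i| <= `|v| * \sum_i `|c i|.
Proof.
apply: le_trans (ler_norm_sum _ _ _) _; rewrite mulr_sumr; apply: ler_sum => i _.
by rewrite normrM; apply: ler_wpM2r => //; exact: coord_le_mx.
Qed.

Lemma lin_boundv (N : nat) (v : 'rV[R]_N) (a : 'I_N -> 'rV[R]_n) :
  enorm (\sum_i v ord0 i *: a i) <= `|v| * \sum_i enorm (a i).
Proof.
apply: le_trans (enorm_sum _) _; rewrite mulr_sumr; apply: ler_sum => i _.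
by rewrite enormZ; apply: ler_wpM2r; [exact: enorm_ge0|exact: coord_le_mx].
Qed.

End Sums.

Section Finite.
Variables (R : realType) (n N : nat).
Variables (y w : 'I_N.+1 -> 'rV[R]_n).
Hypothesis mono : forall i j, ip (y i - y j) (w i - w j) <= 0.

Let a i := y i + w i.
Let b i := ip (y i) (w i).
Let S (t : 'rV[R]_N.+1) := \sum_i t ord0 i *: a i.
Let P (t : 'rV[R]_N.+1) := \sum_i t ord0 i * b i.
Let psi (t : 'rV[R]_N.+1) := P t - ip (S t) (S t) / 4.
Let simplex := [set t : 'rV[R]_N.+1 | forall i, `[0, 1]%classic (t ord0 i)] `&`
               [set t | \sum_i t ord0 i = 1].

Lemma psi_le0 t : simplex t -> psi t <= 0.
Proof.
move=> [t0 /= t1].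
pose yb := \sum_i t ord0 i *: y i.
pose W := \sum_i t ord0 i *: w i.
pose Q := ip yb W.
have SE : S t = yb + W.
  by rewrite /S /yb /W -big_split; apply: eq_bigr => i _; rewrite scalerDr.
have h1 : psi t <= P t - Q.
  rewrite /psi SE.
  have := ip_ge0 (yb - W); rewrite ip_sqB ip_sqD /Q; lra.
pose D := \sum_i \sum_j t ord0 i * t ord0 j * ip (y i - y j) (w i - w j).
have tge0 i : 0 <= t ord0 i.
  by move: (t0 i); rewrite /= in_itv /= => /andP[].
have Dle : D <= 0.
  apply: sumr_le0 => i _; apply: sumr_le0 => j _.
  by apply: mulr_ge0_le0; [apply: mulr_ge0|exact: mono].
pose h i j := t ord0 i * t ord0 j * ip (y i) (w j).
pose T1 := \sum_i \sum_j t ord0 j * (t ord0 i * b i).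
pose T2 := \sum_i \sum_j t ord0 i * (t ord0 j * b j).
pose T3 := \sum_i \sum_j h i j.
pose T4 := \sum_i \sum_j h j i.
have DE : D = T1 + T2 - T3 - T4.
  rewrite /D /T1 /T2 /T3 /T4.
  rewrite (eq_bigr (fun i => \sum_j t ord0 j * (t ord0 i * b i) +
     \sum_j t ord0 i * (t ord0 j * b j) - \sum_j h i j - \sum_j h j i)).
    by rewrite !sumrB !big_split.
  move=> i _.
  rewrite (eq_bigr (fun j => t ord0 j * (t ord0 i * b i) +
     t ord0 i * (t ord0 j * b j) - h i j - h j i)).
    by rewrite !sumrB !big_split.
  move=> j _; rewrite /h /b ipBl !ipBr; ring.
have T1E : T1 = P t.
  rewrite /T1 /P; apply: eq_bigr => i _; by rewrite -mulr_suml t1 mul1r.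
have T2E : T2 = P t.
  rewrite /T2; under eq_bigr => i _ do rewrite -mulr_sumr.
  by rewrite -mulr_suml t1 mul1r.
have T3E : T3 = Q.
  rewrite /T3 /Q /yb ip_suml; apply: eq_bigr => i _.
  rewrite ipZl /W ip_sumr mulr_sumr; apply: eq_bigr => j _.
  by rewrite ipZr /h mulrA.
have T4E : T4 = T3 by rewrite /T4 /T3 exchange_big.
rewrite T4E T3E T1E T2E in DE.
lra.
Qed.


Let e (j : 'I_N.+1) : 'rV[R]_N.+1 := \row_i (i == j)%:R.

Lemma S_comb t j s : S ((1 - s) *: t + s *: e j) = (1 - s) *: S t + s *: a j.
Proof.
rewrite /S (eq_bigr (fun i => (1 - s) *: (t ord0 i *: a i) + s *: ((i == j)%:R *: a i))).
  rewrite big_split /= -!scaler_sumr; congr (_ + _ *: _).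
  rewrite (bigD1 j) //= eqxx scale1r big1 ?addr0 // => i /negbTE ->.
  by rewrite scale0r.
by move=> i _; rewrite /e !mxE !scalerA -scalerDl.
Qed.

Lemma P_comb t j s : P ((1 - s) *: t + s *: e j) = (1 - s) * P t + s * b j.
Proof.
rewrite /P (eq_bigr (fun i => (1 - s) * (t ord0 i * b i) + s * ((i == j)%:R * b i))).
  rewrite big_split /= -!mulr_sumr; congr (_ + _ * _).
  rewrite (bigD1 j) //= eqxx mul1r big1 ?addr0 // => i /negbTE ->.
  by rewrite mul0r.
by move=> i _; rewrite /e !mxE !mulrA -mulrDl.
Qed.

Lemma comb_simplex t j s : simplex t -> 0 <= s <= 1 ->
  simplex ((1 - s) *: t + s *: e j).
Proof.
move=> [/= t0 t1] /andP[s0 s1]; split => /=.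
  move=> i; move: (t0 i); rewrite /= !in_itv /= /e !mxE => /andP[ti0 ti1].
  have d0 : 0 <= ((i == j)%:R : R) by [].
  have d1 : ((i == j)%:R : R) <= 1 by case: (i == j).
  apply/andP; split; nra.
rewrite (eq_bigr (fun i => (1 - s) * t ord0 i + s * (i == j)%:R)).
  rewrite big_split /= -!mulr_sumr t1.
  rewrite (bigD1 j) //= eqxx big1 ?addr0 => [|i /negbTE ->]; last by [].
  rewrite mulr1n; ring.
by move=> i _; rewrite /e !mxE.
Qed.

Lemma e_simplex j : simplex (e j).
Proof.
split => /=.
  move=> i; rewrite /= in_itv /= /e mxE.
  by case: (i == j); rewrite ?lexx ?ler01.
rewrite (bigD1 j) //= /e mxE eqxx big1 ?addr0 // => i /negbTE H.
by rewrite mxE H.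
Qed.

Lemma simplex_compact : compact simplex.
Proof.
apply: compact_closedI.
  have HH := @rV_compact R N.+1 (fun=> `[0, 1]%classic) (fun i => @segment_compact R 0 1).
  exact: HH.
have cg : continuous (fun t : 'rV[R]_N.+1 => \sum_i t ord0 i).
  apply: cont_loclip => u; exists N.+1%:R => v _.
  have -> : \sum_i u ord0 i - \sum_i v ord0 i = \sum_i (u - v) ord0 i * 1.
    rewrite -sumrB; apply: eq_bigr => i _; by rewrite !mxE mulr1.
  apply: le_trans (lin_bound _ _) _.
  by rewrite (eq_bigr (fun=> 1)) ?sumr_const ?card_ord ?mulr_natr ?mulr_natl // => i _; rewrite normr1.
have := (continuous_closedP _).1 cg [set r : R | r = 1] (@closed_eq _ 1).
by apply.
Qed.

Lemma psi_cont : continuous psi.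
Proof.
apply: cont_loclip => u.
pose Aa := \sum_i enorm (a i).
pose Bb := \sum_i `|b i|.
exists (Bb + Aa * (Aa * (2 * `|u| + 1)) / 4) => v uv.
have Aa0 : 0 <= Aa by apply: sumr_ge0 => i _; exact: enorm_ge0.
have Bb0 : 0 <= Bb by apply: sumr_ge0 => i _; exact: normr_ge0.
have hP : `|P u - P v| <= `|u - v| * Bb.
  have -> : P u - P v = \sum_i (u - v) ord0 i * b i.
    rewrite -sumrB; apply: eq_bigr => i _; by rewrite !mxE mulrBl.
  exact: lin_bound.
have hS : enorm (S u - S v) <= `|u - v| * Aa.
  have -> : S u - S v = \sum_i (u - v) ord0 i *: a i.
    rewrite -sumrB; apply: eq_bigr => i _; by rewrite !mxE scalerBl.
  exact: lin_boundv.
have hSu : enorm (S u) <= `|u| * Aa by exact: lin_boundv.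
have hSv : enorm (S v) <= `|v| * Aa by exact: lin_boundv.
have hv : `|v| <= `|u| + 1.
  have := ler_normD (v - u) u; rewrite subrK distrC; move=> H; lra.
have hI : `|ip (S u) (S u) - ip (S v) (S v)| <= enorm (S u - S v) * enorm (S u + S v).
  have -> : ip (S u) (S u) - ip (S v) (S v) = ip (S u - S v) (S u + S v).
    rewrite ipBl !ipDr [ip (S v) (S u)]ipC; ring.
  exact: CSabs.
have hSD : enorm (S u + S v) <= Aa * (2 * `|u| + 1).
  apply: le_trans (enormD _ _) _; have := normr_ge0 u; nra.
have e1 := enorm_ge0 (S u - S v); have e2 := enorm_ge0 (S u + S v).
have n0 := normr_ge0 (u - v).
have hI2 : `|ip (S u) (S u) - ip (S v) (S v)| <= `|u - v| * Aa * (Aa * (2 * `|u| + 1)).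
  apply: le_trans hI _; apply: ler_pM => //.
have -> : psi u - psi v = (P u - P v) - (ip (S u) (S u) - ip (S v) (S v)) / 4.
  rewrite /psi; ring.
apply: le_trans (ler_normB _ _) _.
rewrite normrM [`|4^-1|]ger0_norm //.
have := normr_ge0 (ip (S u) (S u) - ip (S v) (S v)).
nra.
Qed.

Lemma aux_id (s D E s1 s2 s3 p bj : R) : D = s1 / 2 - s2 / 2 + bj - p ->
  E = s1 - 2 * s2 + s3 ->
  s * D - s ^+ 2 * E / 4 =
     ((1 - s) * p + s * bj - ((1 - s) * ((1 - s) * s1) + 2 * ((1 - s) * (s * s2)) + s * (s * s3)) / 4)
     - (p - s1 / 4).
Proof. by move=> -> ->; field. Qed.

Lemma finite_minty : exists x, forall j, 0 <= ip (x - y j) (w j - x).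
Proof.
have ne : simplex !=set0 by exists (e ord0); exact: e_simplex.
have cpsi : {within simplex, continuous psi} by apply: continuous_subspaceT; exact: psi_cont.
have [ts /set_mem tsS tsmax] := compact_EVT_max ne simplex_compact cpsi.
exists (2^-1 *: S ts) => j.
have psi0 := psi_le0 tsS.
set Sx := S ts in psi0 *.
pose s1 := ip Sx Sx; pose s2 := ip Sx (a j); pose s3 := ip (a j) (a j).
pose D := s1 / 2 - s2 / 2 + b j - P ts.
pose E := s1 - 2 * s2 + s3.
have E0 : 0 <= E.
  have := ip_ge0 (a j - Sx); rewrite ip_sqB [ip (a j) Sx]ipC /E /s1 /s2 /s3; lra.
have goalE : ip (2^-1 *: Sx - y j) (w j - 2^-1 *: Sx) = - (s1 / 4 - s2 / 2 + b j).
  rewrite ipBl !ipBr !ipZl !ipZr /s1 /s2 /b /a ipDr [ip Sx (y j)]ipC.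
  by field.
rewrite goalE.
have psiE : psi ts = P ts - s1 / 4 by [].
suff : D <= 0 by rewrite /D in psiE *; lra.
rewrite leNgt; apply/negP => Dpos.
pose s := D / (D + E + 1).
have hDE : 0 < D + E + 1 by lra.
have s0 : 0 < s by apply: divr_gt0.
have sE : s * (D + E + 1) = D by rewrite /s mulfVK // gt_eqF.
have s1' : s <= 1.
  by rewrite /s ler_pdivrMr // mul1r; lra.
have ss : 0 <= s <= 1 by apply/andP; split; [exact: ltW | exact: s1'].
have := tsmax _ (mem_set (comb_simplex j tsS ss)).
rewrite {1}/psi P_comb S_comb -/Sx psiE ip_sqD !ipZl !ipZr -/s1 -/s2 -/s3.
move=> H.
have key : s * D - s ^+ 2 * E / 4 <= 0.
  have -> : s * D - s ^+ 2 * E / 4 =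
     ((1 - s) * P ts + s * b j - ((1 - s) * ((1 - s) * s1) + 2 * ((1 - s) * (s * s2)) + s * (s * s3)) / 4)
     - (P ts - s1 / 4) by apply: aux_id.
  lra.
have sD : s * D = s ^+ 2 * (D + E + 1) by rewrite expr2 -mulrA sE.
have s2pos : 0 < s ^+ 2 by exact: exprn_gt0.
have := mulr_gt0 s2pos Dpos; have := mulr_ge0 (ltW s2pos) E0.
lra.
Qed.

End Finite.

Section Minty.
Variables (R : realType) (n : nat).
Variable A : 'rV[R]_n -> set 'rV[R]_n.
Hypothesis Amax : maximally_monotone A.
Variables (lam : R) (z : 'rV[R]_n).
Hypothesis lam0 : 0 < lam.

Let W (q : 'rV[R]_n * 'rV[R]_n) := z - lam *: q.2.
Let C q := [set x | 0 <= ip (x - q.1) (W q - x)].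

Lemma ball_id (x y w : 'rV[R]_n) :
  ip (x - y) (w - x) = ip (2^-1 *: (w - y)) (2^-1 *: (w - y)) -
     ip (x - (y + 2^-1 *: (w - y))) (x - (y + 2^-1 *: (w - y))).
Proof.
set h := 2^-1 *: (w - y); set m := y + h.
have e1 : x - y = (x - m) + h by apply/rowP => i; rewrite /m /h !mxE; ring.
have e2 : w - x = h - (x - m) by apply/rowP => i; rewrite /m /h !mxE; field.
rewrite e1 e2; move: (x - m) => d.
rewrite ipDl !ipBr [ip h d]ipC; ring.
Qed.

Lemma C_ball q : C q = [set x | enorm (x - (q.1 + 2^-1 *: (W q - q.1))) <= enorm (2^-1 *: (W q - q.1))].
Proof.
apply/funext => x; apply/propext; rewrite /C /= ball_id subr_ge0; split => H.
  by apply: enorm_le_sq; [exact: enorm_ge0 | rewrite enorm_sq].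
by apply: le_trans (enorm_sq_le H) _; rewrite enorm_sq.
Qed.

Lemma C_closed q : closed (C q).
Proof. rewrite C_ball; exact: closed_ball_e. Qed.

Lemma C_compact q : compact (C q).
Proof. rewrite C_ball; exact: compact_ball_e. Qed.

Lemma minty_point : exists x, forall q, A q.1 q.2 -> C q x.
Proof.
case: (pselect (exists q : 'rV[R]_n * 'rV[R]_n, A q.1 q.2)) => [[q0 Aq0] | nA]; last first.
  by exists 0 => q Aq; exfalso; apply: nA; exists q.
have cK := C_compact (q:=q0).
rewrite compact_In0 in cK.
have := cK _ [set q | A q.1 q.2] (fun q => C q0 `&` C q).
case.
- by exists C => // q _; exact: C_closed.
- move=> D' sD'.
  pose s := q0 :: finmap.enum_fset D'.
  pose yy (i : 'I_(size (finmap.enum_fset D')).+1) := (nth q0 s i).1.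
  pose ww (i : 'I_(size (finmap.enum_fset D')).+1) := W (nth q0 s i).
  have inD (i : 'I_(size (finmap.enum_fset D')).+1) : A (nth q0 s i).1 (nth q0 s i).2.
    have : nth q0 s i \in s by apply: mem_nth; rewrite /= ltn_ord.
    rewrite in_cons => /orP[/eqP -> // | /sD'].
    by move=> H; exact: set_mem H.
  have mono' i j : ip (yy i - yy j) (ww i - ww j) <= 0.
    have := Amax.1 _ _ _ _ (inD i) (inD j).
    have -> : ww i - ww j = (- lam) *: ((nth q0 s i).2 - (nth q0 s j).2).
      by apply/rowP => k; rewrite /ww /W !mxE; ring.
    rewrite ipZr /yy => H; rewrite mulNr oppr_le0; exact: mulr_ge0 (ltW lam0) H.
  have [x hx] := finite_minty mono'.
  exists x => q /= Dq; split.
    by have := hx ord0.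
  have iq : (index q s < (size (finmap.enum_fset D')).+1)%N.
    by rewrite -[X in (_ < X)%N]/(size s) index_mem in_cons Dq orbT.
  have := hx (Ordinal iq); rewrite /yy /ww /= nth_index //.
  by rewrite in_cons Dq orbT.
- move=> x Hx; exists x => q Aq.
  by have [] := Hx q Aq.
Qed.

Lemma minty : exists x u, A x u /\ z = x + lam *: u.
Proof.
have [x Hx] := minty_point.
pose u := lam^-1 *: (z - x).
have lamn0 : lam != 0 by rewrite gt_eqF.
have zE : z = x + lam *: u.
  by apply/rowP => i; rewrite /u !mxE; field.
exists x, u; split => //.
pose A' := fun y => [set v | A y v \/ (y = x /\ v = u)].
have key y v : A y v -> 0 <= ip (x - y) (u - v).
  move=> Ayv; have := Hx (y, v) Ayv; rewrite /C /W /=.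
  have -> : u - v = lam^-1 *: (z - lam *: v - x).
    by apply/rowP => i; rewrite /u !mxE; field.
  rewrite ipZr => H; apply: mulr_ge0 => //; rewrite invr_ge0; exact: ltW.
have mA' : monotone_op A'.
  move=> x1 x2 u1 u2 [H1|[-> ->]] [H2|[-> ->]].
  - exact: Amax.1 H1 H2.
  - by rewrite -opprB ipNl -[u1 - u]opprB ipNr opprK; exact: key.
  - exact: key.
  - by rewrite subrr ip0l.
have := Amax.2 A' mA' (fun y v Ayv => or_introl Ayv).
move=> E; have : A' x u by right.
by rewrite E.
Qed.

End Minty.

Section Big.
Variables (R : realType) (T : eqType).

Lemma bigmin_le_seq (s : seq T) (f : T -> R) a : a \in s ->
  \big[Num.min/1]_(x <- s) f x <= f a.
Proof.
elim: s => // b s IH; rewrite in_cons big_cons => /orP[/eqP ->|H].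
  by rewrite ge_min lexx.
by rewrite ge_min (IH H) orbT.
Qed.

Lemma bigmin_gt0 (s : seq T) (f : T -> R) : (forall a, a \in s -> 0 < f a) ->
  0 < \big[Num.min/1]_(x <- s) f x.
Proof.
elim: s => [|b s IH] H; first by rewrite big_nil ltr01.
rewrite big_cons lt_min H ?mem_head //=.
by apply: IH => a ha; apply: H; rewrite in_cons ha orbT.
Qed.

Lemma le_bigmax_seq' (s : seq T) (f : T -> R) a : a \in s ->
  f a <= \big[Num.max/0]_(x <- s) f x.
Proof.
elim: s => // b s IH; rewrite in_cons big_cons => /orP[/eqP ->|H].
  by rewrite le_max lexx.
by rewrite le_max (IH H) orbT.
Qed.

End Big.

Section Resolvent.
Variables (R : realType) (n : nat).
Variable A : 'rV[R]_n -> set 'rV[R]_n.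
Hypothesis Amax : maximally_monotone A.

Lemma resolvent_spec mu z : 0 < mu ->
  exists2 u, A (resolvent A mu z) u & z = resolvent A mu z + mu *: u.
Proof.
move=> mu0; rewrite /resolvent.
have := @xgetPex _ 0 [set x | exists2 u, A x u & z = x + mu *: u].
apply; have [x [u [Axu zE]]] := minty Amax z mu0.
by exists x; exists u.
Qed.

Lemma nonexp mu y1 y2 u1 u2 : 0 < mu -> A y1 u1 -> A y2 u2 ->
  enorm (y1 - y2) <= enorm ((y1 + mu *: u1) - (y2 + mu *: u2)).
Proof.
move=> mu0 A1 A2.
have m := Amax.1 _ _ _ _ A1 A2.
have E : (y1 + mu *: u1) - (y2 + mu *: u2) = (y1 - y2) + mu *: (u1 - u2).
  by apply/rowP => i; rewrite !mxE; ring.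
rewrite E.
have h1 : ip (y1 - y2) (y1 - y2) <= ip (y1 - y2) ((y1 - y2) + mu *: (u1 - u2)).
  rewrite [X in _ <= X]ipDr ipZr lerDl; apply: mulr_ge0 => //; exact: ltW.
have h2 := CS (y1 - y2) ((y1 - y2) + mu *: (u1 - u2)).
rewrite -enorm_sq in h1.
have := enorm_ge0 (y1 - y2); have := enorm_ge0 ((y1 - y2) + mu *: (u1 - u2)).
nra.
Qed.

End Resolvent.

Section LipBall.
Variables (R : realType) (n : nat).
Variable B : 'rV[R]_n -> 'rV[R]_n.
Hypothesis Blip : locally_lipschitz B.

Lemma loclip_ball (a : 'rV[R]_n) : exists p : R * R, [/\ 0 < p.1, 0 <= p.2 &
  forall y w, `|a - y| < 2 * p.1 -> `|a - w| < 2 * p.1 ->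
     enorm (B y - B w) <= p.2 * enorm (y - w)].
Proof.
have [N /nbhs_ballP [e e0 He] [L HL]] := Blip a.
exists (e / 2, Num.max L 0); split => /=.
- by rewrite divr_gt0.
- by rewrite le_max lexx orbT.
- move=> y w hy hw.
  have e2 : 2 * (e / 2) = e by field.
  rewrite e2 in hy hw.
  have Ny : N y by apply: He; rewrite -ball_normE.
  have Nw : N w by apply: He; rewrite -ball_normE.
  apply: le_trans (HL _ _ Ny Nw) _.
  by apply: ler_wpM2r; [exact: enorm_ge0 | rewrite le_max lexx].
Qed.

Lemma lip_ball (c : 'rV[R]_n) (r : R) : exists2 L, 0 < L &
  forall y w, enorm (y - c) <= r -> enorm (w - c) <= r ->
    enorm (B y - B w) <= L * enorm (y - w).
Proof.
have /choice [f Hf] := loclip_ball.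
have cK := compact_ball_e (c:=c) (r:=r).
rewrite compact_cover in cK.
have := cK _ [set a | enorm (a - c) <= r] (fun a => ball a (f a).1).
case.
- by move=> a _; exact: ball_open.
- move=> y Ky; exists y => //; apply: ballxx; by have [] := Hf y.
move=> D' sD' cov.
pose s := finmap.enum_fset D'.
pose rmin := \big[Num.min/1]_(a <- s) (f a).1.
pose Lmax := \big[Num.max/0]_(a <- s) (f a).2.
pose Mmax := \big[Num.max/0]_(a <- s) (enorm (B a) + (f a).2 * (n%:R * (f a).1)).
have rmin0 : 0 < rmin.
  by apply: bigmin_gt0 => a _; have [] := Hf a.
have Lmax0 : 0 <= Lmax.
  rewrite /Lmax; elim/big_ind : _ => // [x1 x2 h1 h2|a _]; first by rewrite le_max h1.
  by have [] := Hf a.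
have Mmax0 : 0 <= Mmax.
  rewrite /Mmax; elim/big_ind : _ => // [x1 x2 h1 h2|a _]; first by rewrite le_max h1.
  have [h1 h2 _] := Hf a; apply: addr_ge0; first exact: enorm_ge0.
  by apply: mulr_ge0 => //; apply: mulr_ge0 => //; exact: ltW.
have covy y : enorm (y - c) <= r -> exists2 a, a \in s & `|a - y| < (f a).1.
  move=> Ky; have [a Da Ba] := cov y Ky.
  by exists a => //; move: Ba; rewrite -ball_normE.
have Bbound y : enorm (y - c) <= r -> enorm (B y) <= Mmax.
  move=> Ky; have [a Da hay] := covy y Ky; have [h1 h2 h3] := Hf a.
  have hB : enorm (B y - B a) <= (f a).2 * enorm (y - a).
    apply: h3; first lra.
    by rewrite subrr normr0; lra.
  have hya : enorm (y - a) <= n%:R * (f a).1.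
    apply: le_trans (enorm_le_mx _) _; rewrite distrC.
    by apply: ler_wpM2l => //; exact: ltW.
  have hM : enorm (B a) + (f a).2 * (n%:R * (f a).1) <= Mmax.
    exact: (le_bigmax_seq' (fun a => enorm (B a) + (f a).2 * (n%:R * (f a).1)) Da).
  have ht := enormBD (B y) (B a) 0; rewrite !subr0 in ht.
  have := enorm_ge0 (y - a); nra.
exists (Lmax + 2 * Mmax / rmin + 1).
  have : 0 <= 2 * Mmax / rmin by apply: divr_ge0 => //; [lra | exact: ltW].
  lra.
move=> y w Ky Kw.
have e0 := enorm_ge0 (y - w).
have M2 : 0 <= 2 * Mmax / rmin by apply: divr_ge0 => //; [lra | exact: ltW].
case: (ltP (enorm (y - w)) rmin) => hyw.
  have [a Da hay] := covy y Ky; have [h1 h2 h3] := Hf a.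
  have ra : rmin <= (f a).1 by exact: bigmin_le_seq.
  have hyw' : `|y - w| < (f a).1.
    apply: le_lt_trans (mx_le_enorm _) _; lra.
  have haw : `|a - w| < 2 * (f a).1.
    apply: le_lt_trans (ler_distD y _ _) _; lra.
  have hL : (f a).2 <= Lmax by exact: (le_bigmax_seq' (fun a => (f a).2) Da).
  apply: le_trans (h3 _ _ _ haw) _; first lra.
  nra.
have ht := enormBD (B y) 0 (B w); rewrite subr0 sub0r enormN in ht.
have := Bbound _ Ky; have := Bbound _ Kw.
have hr : 2 * Mmax <= 2 * Mmax / rmin * enorm (y - w).
  by have := ler_wpM2l M2 hyw; rewrite divfK ?gt_eqF.
nra.
Qed.

End LipBall.

Section Main.
Variables (R : realType) (n : nat).
Variables (A : 'rV[R]_n -> set 'rV[R]_n) (B : 'rV[R]_n -> 'rV[R]_n).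
Variables (delta sigma : R) (x : nat -> 'rV[R]_n) (lam : nat -> R).
Variables (rho : nat -> R) (i : nat -> nat).
Hypothesis Amax : maximally_monotone A.
Hypothesis Bmono : monotone_fun B.
Hypothesis Blip : locally_lipschitz B.
Hypothesis Hd : 0 < delta < 1.
Hypothesis Hs : 0 < sigma < 1.
Hypothesis Hl0 : 0 < lam 0.
Hypothesis Hrho : forall k, rho k = 1 \/ rho k = sigma^-1.
Hypothesis Hlam : forall k, lam k.+1 = rho k * lam k * sigma ^+ i k.
Hypothesis Hx : forall k, x k.+2 = resolvent A (lam k.+1)
       (x k.+1 - lam k.+1 *: B (x k.+1) - lam k *: (B (x k.+1) - B (x k))).
Hypothesis Hls : forall k, lam k.+1 * enorm (B (x k.+2) - B (x k.+1))
               <= delta / 2 * enorm (x k.+2 - x k.+1).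

Lemma d0 : 0 < delta. Proof. by case/andP: Hd. Qed.
Lemma d1 : delta < 1. Proof. by case/andP: Hd. Qed.
Lemma s0 : 0 < sigma. Proof. by case/andP: Hs. Qed.
Lemma s1 : sigma < 1. Proof. by case/andP: Hs. Qed.

Lemma rho_ge1 k : 1 <= rho k.
Proof.
case: (Hrho k) => ->; first exact: lexx.
by rewrite invf_ge1 ?s0 // ltW // s1.
Qed.

Lemma lam_pos k : 0 < lam k.
Proof.
elim: k => [//|k IH]; rewrite Hlam.
apply: mulr_gt0; last exact: exprn_gt0 s0.
by apply: mulr_gt0 => //; apply: lt_le_trans (rho_ge1 k); exact: ltr01.
Qed.

Lemma incl k : exists u, A (x k.+2) u /\
  x k.+1 - lam k.+1 *: B (x k.+1) - lam k *: (B (x k.+1) - B (x k)) = x k.+2 + lam k.+1 *: u.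
Proof.
have [u Au E] := resolvent_spec Amax
   (x k.+1 - lam k.+1 *: B (x k.+1) - lam k *: (B (x k.+1) - B (x k))) (lam_pos k.+1).
by exists u; rewrite Hx; split.
Qed.

Variable u : nat -> 'rV[R]_n.
Hypothesis Hu : forall k, A (x k.+2) (u k) /\
  x k.+1 - lam k.+1 *: B (x k.+1) - lam k *: (B (x k.+1) - B (x k)) = x k.+2 + lam k.+1 *: u k.

Lemma err_id k : lam k.+1 *: (u k + B (x k.+2)) =
  (x k.+1 - x k.+2) + lam k.+1 *: (B (x k.+2) - B (x k.+1)) - lam k *: (B (x k.+1) - B (x k)).
Proof.
have [_ E] := Hu k.
apply/rowP => j; have := congr1 (fun v : 'rV[R]_n => v ord0 j) E.
rewrite !mxE => E'; lra.
Qed.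

Lemma pol3 (a b q : 'rV[R]_n) :
  2 * ip (b - q) (a - b) = ip (a - q) (a - q) - ip (b - q) (b - q) - ip (b - a) (b - a).
Proof.
have e1 : a - b = (a - q) - (b - q) by apply/rowP => j; rewrite !mxE; ring.
have e2 : b - a = (b - q) - (a - q) by apply/rowP => j; rewrite !mxE; ring.
rewrite e1 e2; move: (a - q) (b - q) => s t.
rewrite !ipBr !ipBl [ip t s]ipC; ring.
Qed.

Definition iszero q := A q (- B q).

Definition phi q k := ip (x k.+1 - q) (x k.+1 - q)
   - 2 * lam k * ip (x k.+1 - q) (B (x k.+1) - B (x k))
   + delta / 2 * ip (x k.+1 - x k) (x k.+1 - x k).

Lemma descent q m : iszero q ->
  phi q m.+2 <= phi q m.+1 - (1 - delta) * ip (x m.+3 - x m.+2) (x m.+3 - x m.+2).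
Proof.
move=> Zq.
set a := x m.+1; set b := x m.+2; set c := x m.+3.
set l := lam m.+2; set l' := lam m.+1.
have [Au _] := Hu m.+1.
have E := err_id m.+1; rewrite -/a -/b -/c -/l -/l' in E Au.
have mA := Amax.1 _ _ _ _ Au Zq.
have mB := Bmono c q.
have lp : 0 < l by exact: lam_pos.
have lp' : 0 < l' by exact: lam_pos.
have E1 : 0 <= ip (c - q) (b - c) + l * ip (c - q) (B c - B b) - l' * ip (c - q) (B b - B a).
  have S1 : 0 <= ip (c - q) (u m.+1 + B c).
    have -> : u m.+1 + B c = (u m.+1 - - B q) + (B c - B q).
      by apply/rowP => j; rewrite !mxE; ring.
    by rewrite ipDr; exact: addr_ge0 mA mB.
  have S2 : 0 <= ip (c - q) (l *: (u m.+1 + B c)).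
    by rewrite ipZr; exact: mulr_ge0 (ltW lp) S1.
  move: S2; rewrite E (ipBr (b - c + l *: (B c - B b)) (l' *: (B b - B a)) (c - q)).
  by rewrite (ipDr (b - c) (l *: (B c - B b)) (c - q)) !ipZr.
have P1 := pol3 b c q.
have P2 : ip (c - q) (B b - B a) = ip (b - q) (B b - B a) + ip (c - b) (B b - B a).
  have -> : c - q = (b - q) + (c - b) by apply/rowP => j; rewrite !mxE; ring.
  by rewrite ipDl.
have hls := Hls m; rewrite -/a -/b -/c -/l' in hls.
have cs := CSabs (c - b) (B b - B a).
have e1p := enorm_ge0 (c - b); have e2p := enorm_ge0 (b - a).
have gp := enorm_ge0 (B b - B a).
have T1 : - (l' * ip (c - b) (B b - B a)) <= delta / 2 * (enorm (c - b) * enorm (b - a)).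
  have h1 : - ip (c - b) (B b - B a) <= enorm (c - b) * enorm (B b - B a).
    by apply: le_trans cs; rewrite -normrN ler_norm.
  have h2 : l' * (- ip (c - b) (B b - B a)) <= l' * (enorm (c - b) * enorm (B b - B a)).
    by apply: ler_wpM2l => //; exact: ltW.
  have h3 : enorm (c - b) * (l' * enorm (B b - B a)) <= enorm (c - b) * (delta / 2 * enorm (b - a)).
    by apply: ler_wpM2l.
  nra.
have T2 : enorm (c - b) * enorm (b - a) <= (ip (c - b) (c - b) + ip (b - a) (b - a)) / 2.
  rewrite -!enorm_sq; have := sqr_ge0 (enorm (c - b) - enorm (b - a)); nra.
have T2' : delta / 2 * (enorm (c - b) * enorm (b - a)) <=
           delta / 2 * ((ip (c - b) (c - b) + ip (b - a) (b - a)) / 2).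
  by apply: ler_wpM2l => //; apply: divr_ge0 => //; exact: ltW d0.
have cbE : ip (c - b) (c - b) = ip (b - c) (b - c).
  by rewrite -(opprB b c) ipNl ipNr opprK.
rewrite /phi -/a -/b -/c -/l -/l'.
rewrite P2 in E1; rewrite cbE in T2' P1 *.
lra.
Qed.

Lemma phi_lower q m : phi q m.+1 >= (1 - delta / 2) * ip (x m.+2 - q) (x m.+2 - q).
Proof.
rewrite /phi.
have hls := Hls m.
have cs := CSabs (x m.+2 - q) (B (x m.+2) - B (x m.+1)).
have lp := lam_pos m.+1.
set eq := enorm (x m.+2 - q); set ed := enorm (x m.+2 - x m.+1);
set g := enorm (B (x m.+2) - B (x m.+1)) in hls cs *.
have e1p : 0 <= eq by exact: enorm_ge0.
have e2p : 0 <= ed by exact: enorm_ge0.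
have gp : 0 <= g by exact: enorm_ge0.
have h1 : 2 * lam m.+1 * ip (x m.+2 - q) (B (x m.+2) - B (x m.+1)) <= delta * (eq * ed).
  have h2 : ip (x m.+2 - q) (B (x m.+2) - B (x m.+1)) <= eq * g.
    by apply: le_trans (ler_norm _) cs.
  have h3 : lam m.+1 * ip (x m.+2 - q) (B (x m.+2) - B (x m.+1)) <= lam m.+1 * (eq * g).
    by apply: ler_wpM2l => //; exact: ltW.
  have h4 : eq * (lam m.+1 * g) <= eq * (delta / 2 * ed) by apply: ler_wpM2l.
  nra.
have T2 : eq * ed <= (ip (x m.+2 - q) (x m.+2 - q) + ip (x m.+2 - x m.+1) (x m.+2 - x m.+1)) / 2.
  rewrite -!enorm_sq -/eq -/ed; have := sqr_ge0 (eq - ed); nra.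
have T2' : delta * (eq * ed) <= delta * ((ip (x m.+2 - q) (x m.+2 - q) + ip (x m.+2 - x m.+1) (x m.+2 - x m.+1)) / 2).
  by apply: ler_wpM2l => //; exact: ltW d0.
lra.
Qed.


Lemma phi_upper q m : phi q m.+1 <= 2 * ip (x m.+2 - q) (x m.+2 - q) +
   ip (x m.+2 - x m.+1) (x m.+2 - x m.+1).
Proof.
rewrite /phi.
have hls := Hls m.
have cs := CSabs (x m.+2 - q) (B (x m.+2) - B (x m.+1)).
have lp := lam_pos m.+1.
set eq := enorm (x m.+2 - q); set ed := enorm (x m.+2 - x m.+1);
set g := enorm (B (x m.+2) - B (x m.+1)) in hls cs *.
have e1p : 0 <= eq by exact: enorm_ge0.
have e2p : 0 <= ed by exact: enorm_ge0.
have gp : 0 <= g by exact: enorm_ge0.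
have h1 : - (2 * lam m.+1 * ip (x m.+2 - q) (B (x m.+2) - B (x m.+1))) <= delta * (eq * ed).
  have h2 : - ip (x m.+2 - q) (B (x m.+2) - B (x m.+1)) <= eq * g.
    by apply: le_trans cs; rewrite -normrN ler_norm.
  have h3 : lam m.+1 * (- ip (x m.+2 - q) (B (x m.+2) - B (x m.+1))) <= lam m.+1 * (eq * g).
    by apply: ler_wpM2l => //; exact: ltW.
  have h4 : eq * (lam m.+1 * g) <= eq * (delta / 2 * ed) by apply: ler_wpM2l.
  nra.
have T2 : eq * ed <= (ip (x m.+2 - q) (x m.+2 - q) + ip (x m.+2 - x m.+1) (x m.+2 - x m.+1)) / 2.
  rewrite -!enorm_sq -/eq -/ed; have := sqr_ge0 (eq - ed); nra.
have T2' : delta * (eq * ed) <= 1 * (eq * ed).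
  by apply: ler_wpM2r; [exact: mulr_ge0 | exact: ltW d1].
have T3 : delta / 2 * ip (x m.+2 - x m.+1) (x m.+2 - x m.+1) <= 1 / 2 * ip (x m.+2 - x m.+1) (x m.+2 - x m.+1).
  apply: ler_wpM2r; first exact: ip_ge0.
  by have := d1; lra.
have := ip_ge0 (x m.+2 - x m.+1); have := ip_ge0 (x m.+2 - q).
have := d0; have := d1.
lra.
Qed.

Lemma phi_mono q m j : iszero q -> phi q (m + j).+1 <= phi q m.+1.
Proof.
move=> Zq; elim: j => [|j IH]; first by rewrite addn0.
rewrite addnS; apply: le_trans (descent (m + j) Zq) _.
have := ip_ge0 (x (m + j).+3 - x (m + j).+2); have := d1.
move=> h1 h2; have : 0 <= (1 - delta) * ip (x (m + j).+3 - x (m + j).+2) (x (m + j).+3 - x (m + j).+2).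
  by apply: mulr_ge0 => //; lra.
lra.
Qed.

Variable z : 'rV[R]_n.
Hypothesis Zz : iszero z.

Definition Q0 := phi z 1.
Definition R1 := enorm (x 0 - z) + enorm (x 1 - z) + Num.sqrt (Q0 / (1 - delta / 2)).

Lemma R1_ge0 : 0 <= R1.
Proof. by rewrite /R1 !addr_ge0 ?enorm_ge0 ?sqrtr_ge0. Qed.

Lemma x_bound k : enorm (x k - z) <= R1.
Proof.
have h0 := enorm_ge0 (x 0 - z); have h1 := enorm_ge0 (x 1 - z).
have h2 := sqrtr_ge0 (Q0 / (1 - delta / 2)).
case: k => [|[|m]]; rewrite /R1; try lra.
have hl := phi_lower z m.
have hm := phi_mono 0 m Zz; rewrite add0n in hm.
have dd : 0 < 1 - delta / 2 by have := d1; have := d0; lra.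
have Hi : ip (x m.+2 - z) (x m.+2 - z) <= Q0 / (1 - delta / 2).
  rewrite ler_pdivlMr // /Q0; lra.
have H : enorm (x m.+2 - z) <= Num.sqrt (Q0 / (1 - delta / 2)) by exact: ler_wsqrtr Hi.
lra.
Qed.

Variable L1 : R.
Hypothesis HL1pos : 0 < L1.
Hypothesis HL1 : forall y w, enorm (y - z) <= R1 -> enorm (w - z) <= R1 ->
  enorm (B y - B w) <= L1 * enorm (y - w).

Definition R2 := R1 + L1 * R1 + 2 * R1 + lam 0 * enorm (B (x 1) - B (x 0)).

Lemma R1_le_R2 : R1 <= R2.
Proof.
have := R1_ge0; have := mulr_ge0 (ltW HL1pos) R1_ge0.
have := mulr_ge0 (ltW Hl0) (enorm_ge0 (B (x 1) - B (x 0))).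
rewrite /R2; lra.
Qed.

Lemma enorm3 (a b c : 'rV[R]_n) : enorm (a - b - c) <= enorm a + enorm b + enorm c.
Proof.
apply: le_trans (enormD _ _) _; rewrite enormN.
by apply: lerD => //; apply: le_trans (enormD _ _) _; rewrite enormN.
Qed.

Lemma lamB_bound k : lam k * enorm (B (x k.+1) - B (x k)) <= 2 * R1 + lam 0 * enorm (B (x 1) - B (x 0)).
Proof.
case: k => [|m]; first by have := R1_ge0; lra.
have h := Hls m.
have h1 := enorm_ge0 (x m.+2 - x m.+1).
have h2 : enorm (x m.+2 - x m.+1) <= 2 * R1.
  have := enormBD (x m.+2) z (x m.+1); rewrite (enormB z).
  have := x_bound m.+2; have := x_bound m.+1; lra.
have : delta / 2 * enorm (x m.+2 - x m.+1) <= enorm (x m.+2 - x m.+1).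
  rewrite -[X in _ <= X]mul1r; apply: ler_wpM2r => //; have := d1; lra.
have := mulr_ge0 (ltW Hl0) (enorm_ge0 (B (x 1) - B (x 0))).
lra.
Qed.

Lemma trial_bound k mu : 0 < mu -> mu <= 1 ->
  enorm (resolvent A mu (x k.+1 - mu *: B (x k.+1) - lam k *: (B (x k.+1) - B (x k))) - z) <= R2.
Proof.
move=> mu0 mu1.
set arg := x k.+1 - mu *: B (x k.+1) - lam k *: (B (x k.+1) - B (x k)).
set y := resolvent A mu arg.
have [uy Ay E] := resolvent_spec Amax arg mu0.
have ne := nonexp Amax mu0 Ay Zz; rewrite -E in ne.
have V : arg - (z + mu *: - B z) =
   (x k.+1 - z) - mu *: (B (x k.+1) - B z) - lam k *: (B (x k.+1) - B (x k)).
  by apply/rowP => j; rewrite !mxE; ring.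
rewrite V in ne.
have T := enorm3 (x k.+1 - z) (mu *: (B (x k.+1) - B z)) (lam k *: (B (x k.+1) - B (x k))).
rewrite !enormZ !ger0_norm ?(ltW (lam_pos k)) ?(ltW mu0) // in T.
have LB : enorm (B (x k.+1) - B z) <= L1 * enorm (x k.+1 - z).
  apply: HL1; first exact: x_bound.
  by rewrite subrr enorm0; exact: R1_ge0.
have xb := x_bound k.+1.
have LB2 : mu * enorm (B (x k.+1) - B z) <= L1 * R1.
  have h := enorm_ge0 (B (x k.+1) - B z).
  have : L1 * enorm (x k.+1 - z) <= L1 * R1 by apply: ler_wpM2l => //; exact: ltW.
  nra.
have c0 := mulr_ge0 (ltW Hl0) (enorm_ge0 (B (x 1) - B (x 0))).
have LT := lamB_bound k.
rewrite /R2; lra.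
Qed.

Variable L2 : R.
Hypothesis HL2pos : 0 < L2.
Hypothesis HL2 : forall y w, enorm (y - z) <= R2 -> enorm (w - z) <= R2 ->
  enorm (B y - B w) <= L2 * enorm (y - w).
Hypothesis Hfail : forall k (j : nat), (j < i k)%N ->
     let mu := rho k * lam k * sigma ^+ j in
     let y := resolvent A mu
       (x k.+1 - mu *: B (x k.+1) - lam k *: (B (x k.+1) - B (x k))) in
     ~ (mu * enorm (B y - B (x k.+1)) <= delta / 2 * enorm (y - x k.+1)).

Definition cmin := Num.min (lam 0) (Num.min sigma (sigma * delta / (2 * L2))).

Lemma cmin_pos : 0 < cmin.
Proof.
rewrite /cmin !lt_min Hl0 s0 /=; apply: divr_gt0; last exact: mulr_gt0.
exact: mulr_gt0 s0 d0.
Qed.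

Lemma lam_lower k : cmin <= lam k.
Proof.
elim: k => [|k IH]; first by rewrite /cmin ge_min lexx.
rewrite Hlam; case Eik: (i k) => [|j].
  rewrite expr0 mulr1; apply: le_trans IH _.
  by apply: ler_peMl; [exact: ltW (lam_pos k) | exact: rho_ge1].
have hf := Hfail (j:=j) (k:=k); rewrite Eik ltnSn in hf; move: (hf isT) => /= {hf}.
set mu := rho k * lam k * sigma ^+ j.
rewrite exprSr mulrA -/mu.
have mu0 : 0 < mu.
  apply: mulr_gt0; last exact: exprn_gt0 s0.
  by apply: mulr_gt0; [apply: lt_le_trans (rho_ge1 k); exact: ltr01 | exact: lam_pos].
have sp := s0.
case: (leP 1 mu) => hmu hf.
  have : sigma <= mu * sigma by rewrite ler_peMl //; exact: ltW.
  by move=> h; rewrite /cmin !ge_min h /= orbT.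
set y := resolvent A mu _ in hf.
have yb : enorm (y - z) <= R2 by apply: trial_bound => //; exact: ltW.
have xb : enorm (x k.+1 - z) <= R2 := le_trans (x_bound k.+1) R1_le_R2.
have Lb := HL2 yb xb.
move/negP: hf; rewrite -ltNge => hf.
have e0 := enorm_ge0 (y - x k.+1).
have g0 := enorm_ge0 (B y - B (x k.+1)).
have hmL : delta / 2 < mu * L2.
  have h1 : mu * enorm (B y - B (x k.+1)) <= mu * (L2 * enorm (y - x k.+1)).
    by apply: ler_wpM2l => //; exact: ltW.
  nra.
have : sigma * delta / (2 * L2) <= mu * sigma.
  rewrite ler_pdivrMr; last exact: mulr_gt0.
  nra.
move=> h; rewrite /cmin !ge_min; apply/orP; right; apply/orP; right; exact: h.
Qed.

Lemma dlim eps : 0 < eps -> exists N, forall k, (N <= k)%N -> enorm (x k.+1 - x k) < eps.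
Proof.
move=> e0.
pose E := [set phi z m.+1 | m in [set: nat]].
have lb : lbound E 0.
  move=> r [m _ <-]; apply: le_trans (phi_lower z m).
  apply: mulr_ge0; last exact: ip_ge0.
  by have := d1; lra.
have hE : has_inf E by split; [exists (phi z 1); exists 0 | exists 0].
have dp : 0 < (1 - delta) * eps ^+ 2.
  by apply: mulr_gt0; [have := d1; lra | exact: exprn_gt0].
have [r [N _ <-] hr] := inf_adherent dp hE.
exists N.+2 => k hk.
have [m Ekm] : exists m, k = m.+2.
  by exists (k - 2)%N; case: k hk => [|[|k]] //= _; rewrite subn2.
subst k.
have mN : (N <= m)%N by move: hk.
have h1 := descent m Zz.
have h2 : phi z m.+1 <= phi z N.+1.
  by have := phi_mono N (m - N) Zz; rewrite subnKC.
have h3 : inf E <= phi z m.+2 by apply: (ge_inf hE.2); exists m.+1.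
have h4 : (1 - delta) * ip (x m.+3 - x m.+2) (x m.+3 - x m.+2) < (1 - delta) * eps ^+ 2 by lra.
rewrite ltr_pM2l in h4; last by have := d1; lra.
rewrite -enorm_sq in h4.
have := enorm_ge0 (x m.+3 - x m.+2); nra.
Qed.

Lemma err_bound m : enorm (u m.+1 + B (x m.+3)) <=
   (2 * enorm (x m.+3 - x m.+2) + enorm (x m.+2 - x m.+1)) / cmin.
Proof.
have E := err_id m.+1.
have lp := lam_pos m.+2; have lp' := lam_pos m.+1.
have cm := lam_lower m.+2; have cp := cmin_pos.
have h1 : lam m.+2 * enorm (u m.+1 + B (x m.+3)) <=
   enorm (x m.+3 - x m.+2) + lam m.+2 * enorm (B (x m.+3) - B (x m.+2))
   + lam m.+1 * enorm (B (x m.+2) - B (x m.+1)).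
  rewrite -(ger0_norm (ltW lp)) -enormZ E (enormB (x m.+3) (x m.+2)).
  apply: le_trans (enormD _ _) _; rewrite enormN.
  apply: lerD; last by rewrite enormZ ger0_norm //; exact: ltW.
  apply: le_trans (enormD _ _) _.
  by rewrite enormZ ger0_norm //; exact: ltW.
have h2 := Hls m.+1; have h3 := Hls m.
have e1 := enorm_ge0 (x m.+3 - x m.+2); have e2 := enorm_ge0 (x m.+2 - x m.+1).
have dd := d1; have dd0 := d0.
have h4 : lam m.+2 * enorm (u m.+1 + B (x m.+3)) <=
   2 * enorm (x m.+3 - x m.+2) + enorm (x m.+2 - x m.+1).
  have : delta / 2 * enorm (x m.+3 - x m.+2) <= enorm (x m.+3 - x m.+2).
    rewrite -[X in _ <= X]mul1r; apply: ler_wpM2r => //; lra.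
  have : delta / 2 * enorm (x m.+2 - x m.+1) <= enorm (x m.+2 - x m.+1).
    rewrite -[X in _ <= X]mul1r; apply: ler_wpM2r => //; lra.
  lra.
rewrite ler_pdivlMr //.
have := enorm_ge0 (u m.+1 + B (x m.+3)).
nra.
Qed.

Variable p : 'rV[R]_n.
Hypothesis Hp : forall e, 0 < e -> forall M, exists2 k, (M <= k)%N & `|p - x k| < e.

Lemma key_ineq yy v : A yy v -> 0 <= ip (p - yy) (- B p - v).
Proof.
move=> Ayv; rewrite leNgt; apply/negP => gneg.
set g := ip (p - yy) (- B p - v) in gneg.
pose tau := - g.
have tau0 : 0 < tau by rewrite /tau oppr_gt0.
have [[rp Lp] [/= rp0 Lp0 HLp]] := loclip_ball Blip p.
pose K1 := enorm (B p) + Lp + enorm v + enorm (p - yy) * Lp + 1.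
have K10 : 0 < K1.
  have := enorm_ge0 (B p); have := enorm_ge0 v; have := mulr_ge0 (enorm_ge0 (p - yy)) Lp0.
  rewrite /K1; lra.
pose eta := Num.min 1 (tau / (2 * K1)).
have eta0 : 0 < eta by rewrite lt_min ltr01 /=; apply: divr_gt0 => //; lra.
have eta1 : eta <= 1 by rewrite ge_min lexx.
have etaK : eta * K1 <= tau / 2.
  have : eta <= tau / (2 * K1) by rewrite /eta ge_min lexx orbT.
  rewrite ler_pdivlMr; last lra.
  lra.
pose K2 := enorm (p - yy) + 1.
have K20 : 0 < K2 by have := enorm_ge0 (p - yy); rewrite /K2; lra.
pose e2 := tau / (2 * K2).
have e20 : 0 < e2 by apply: divr_gt0 => //; lra.
have cp := cmin_pos.
pose e3 := e2 * cmin / 3.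
have e30 : 0 < e3 by rewrite /e3; apply: divr_gt0 => //; exact: mulr_gt0.
have [N HN] := dlim e30.
pose e' := Num.min (2 * rp) (eta / (n%:R + 1)).
have e'0 : 0 < e' by rewrite lt_min; apply/andP; split; [lra | apply: divr_gt0 => //; lra].
have [k hk hpk] := Hp e'0 N.+3.
have [m Ekm] : exists m, k = m.+3.
  by exists (k - 3)%N; case: k hk {hpk} => [|[|[|k]]] //= _; rewrite subSS subSS subSS subn0.
subst k.
set t := x m.+3.
have n0 : 0 <= (n%:R : R) by [].
have htp : enorm (t - p) <= eta.
  apply: le_trans (enorm_le_mx _) _.
  rewrite distrC.
  have h : `|p - t| <= eta / (n%:R + 1).
    by apply: ltW; apply: lt_le_trans hpk _; rewrite /e' ge_min lexx orbT.
  have : n%:R * `|p - t| <= n%:R * (eta / (n%:R + 1)) by apply: ler_wpM2l.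
  have : n%:R * (eta / (n%:R + 1)) <= eta.
    rewrite mulrA ler_pdivrMr; last lra.
    nra.
  lra.
have hpt2 : `|p - t| < 2 * rp by apply: lt_le_trans hpk _; rewrite /e' ge_min lexx.
have LB : enorm (B t - B p) <= Lp * enorm (t - p).
  by apply: HLp => //; rewrite subrr normr0; lra.
have [Au _] := Hu m.+1.
have mono := Amax.1 _ _ _ _ Au Ayv.
rewrite -/t in mono.
set err := u m.+1 + B t.
have eb : enorm err < e2.
  have h := err_bound m; rewrite -/t -/err in h.
  apply: le_lt_trans h _.
  rewrite ltr_pdivrMr //.
  have hNm : (N <= m)%N by move: hk.
  have h1 := HN m.+2 (leqW (leqW hNm)).
  have h2 := HN m.+1 (leqW hNm).
  rewrite /e3 in h1 h2.
  have : e2 * cmin / 3 * 3 = e2 * cmin by field.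
  lra.
have split1 : ip (t - yy) (u m.+1 - v) =
   g + ip (t - p) (- B t - v) + ip (p - yy) (B p - B t) + ip (t - yy) err.
  have E1 : u m.+1 - v = (- B t - v) + err by apply/rowP => j; rewrite !mxE; ring.
  rewrite E1 (ipDr (- B t - v) err (t - yy)).
  have E2 : t - yy = (t - p) + (p - yy) by apply/rowP => j; rewrite !mxE; ring.
  have E3 : - B t - v = (- B p - v) + (B p - B t) by apply/rowP => j; rewrite !mxE; ring.
  rewrite {1}E2 (ipDl (t - p) (p - yy) (- B t - v)) {2}E3.
  rewrite (ipDr (- B p - v) (B p - B t) (p - yy)) -/g.
  ring.
have b1 : ip (t - p) (- B t - v) <= eta * (K1 - enorm (p - yy) * Lp - 1).
  apply: le_trans (ler_norm _) _; apply: le_trans (CSabs _ _) _.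
  have hBt : enorm (- B t - v) <= enorm (B p) + Lp * eta + enorm v.
    apply: le_trans (enormD _ _) _; rewrite !enormN.
    have : enorm (B t) <= enorm (B p) + enorm (B t - B p).
      by have := enormBD (B t) (B p) 0; rewrite !subr0 => H; lra.
    have : Lp * enorm (t - p) <= Lp * eta by apply: ler_wpM2l.
    lra.
  have ht0 := enorm_ge0 (t - p).
  have hB0 := enorm_ge0 (- B t - v).
  have : enorm (t - p) * enorm (- B t - v) <= eta * (enorm (B p) + Lp * eta + enorm v).
    apply: ler_pM => //.
  have : Lp * eta <= Lp by rewrite -[X in _ <= X]mulr1; apply: ler_wpM2l.
  have := enorm_ge0 (B p); have := enorm_ge0 v.
  rewrite /K1. nra.
have b2 : ip (p - yy) (B p - B t) <= enorm (p - yy) * Lp * eta.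
  apply: le_trans (ler_norm _) _; apply: le_trans (CSabs _ _) _.
  rewrite (enormB (B p)) -mulrA; apply: ler_wpM2l; first exact: enorm_ge0.
  apply: le_trans LB _; apply: ler_wpM2l => //.
have b3 : ip (t - yy) err < tau / 2.
  apply: le_lt_trans (ler_norm _) _; apply: le_lt_trans (CSabs _ _) _.
  have : enorm (t - yy) <= K2.
    have := enormBD t p yy; rewrite /K2; lra.
  have := enorm_ge0 (t - yy); have := enorm_ge0 err.
  have : K2 * e2 = tau / 2 by rewrite /e2; field; lra.
  nra.
have : eta * (K1 - enorm (p - yy) * Lp - 1) + enorm (p - yy) * Lp * eta <= tau / 2.
  lra.
rewrite /tau in b3 *.
lra.
Qed.

Lemma p_zero : iszero p.
Proof.
pose A' := fun y => [set w | A y w \/ (y = p /\ w = - B p)].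
have mA' : monotone_op A'.
  move=> x1 x2 u1 u2 [H1|[-> ->]] [H2|[-> ->]].
  - exact: Amax.1 H1 H2.
  - by rewrite -opprB ipNl -[u1 - - B p]opprB ipNr opprK; exact: key_ineq.
  - exact: key_ineq.
  - by rewrite subrr ip0l.
have := Amax.2 A' mA' (fun y w Ayw => or_introl Ayw).
move=> E; have : A' p (- B p) by right.
by rewrite E.
Qed.

Lemma conv : x @ \oo --> p.
Proof.
have Zp := p_zero.
apply/(@cvgrPdist_lt _ _ _ \oo) => eps e0.
pose eta := eps / 3.
have eta0 : 0 < eta by rewrite /eta divr_gt0.
have [N HN] := dlim eta0.
have n0 : 0 <= (n%:R : R) by [].
have e1 : 0 < eta / (n%:R + 1) by apply: divr_gt0 => //; lra.
have [k hk hpk] := Hp e1 N.+2.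
have [m Ekm] : exists m, k = m.+2.
  by exists (k - 2)%N; case: k hk {hpk} => [|[|k]] //= _; rewrite subn2.
subst k.
have hNm : (N <= m)%N by move: hk.
have hd := HN m.+1 (leqW hNm).
have hxp : enorm (x m.+2 - p) <= eta.
  apply: le_trans (enorm_le_mx _) _.
  rewrite distrC.
  have h : `|p - x m.+2| <= eta / (n%:R + 1) by exact: ltW.
  have : n%:R * `|p - x m.+2| <= n%:R * (eta / (n%:R + 1)) by apply: ler_wpM2l.
  have : n%:R * (eta / (n%:R + 1)) <= eta.
    rewrite mulrA ler_pdivrMr; last lra.
    nra.
  lra.
have hu := phi_upper p m.
have i1 : ip (x m.+2 - p) (x m.+2 - p) <= eta ^+ 2.
  by apply: enorm_sq_le.
have i2 : ip (x m.+2 - x m.+1) (x m.+2 - x m.+1) <= eta ^+ 2.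
  by apply: enorm_sq_le; exact: ltW.
exists m.+2 => // j hj.
have [d Ed] : exists d, j = (m + d).+2.
  by exists (j - m.+2)%N; rewrite -!addSn subnKC.
subst j.
have hl := phi_lower p (m + d).
have hm := phi_mono m d Zp.
have dd : 1 / 2 < 1 - delta / 2 by have := d1; lra.
have ip0 := ip_ge0 (x (m + d).+2 - p).
have H1 : (1 - delta / 2) * ip (x (m + d).+2 - p) (x (m + d).+2 - p) <= 3 * eta ^+ 2 by lra.
have H2 : ip (x (m + d).+2 - p) (x (m + d).+2 - p) < eps ^+ 2.
  have : eps ^+ 2 = 9 * eta ^+ 2 by rewrite /eta; field.
  have := exprn_gt0 2 eta0.
  nra.
rewrite -enorm_sq in H2.
apply: le_lt_trans (mx_le_enorm _) _.
rewrite -(enormB (x (m + d).+2)).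
have := enorm_ge0 (x (m + d).+2 - p); nra.
Qed.

End Main.

Unset Implicit Arguments.

(* Index shift: x k = x_{k-1} and lam k = λ_{k-1}; rho k = ρ_k, i k = i at step k. *)
Theorem theorem3p4 (R : realType) (n : nat)
  (A : 'rV[R]_n -> set 'rV[R]_n) (B : 'rV[R]_n -> 'rV[R]_n)
  (delta sigma : R) (x : nat -> 'rV[R]_n) (lam : nat -> R)
  (rho : nat -> R) (i : nat -> nat) :
  maximally_monotone A -> monotone_fun B -> locally_lipschitz B ->
  zeros_sum A B !=set0 ->
  0 < delta < 1 -> 0 < sigma < 1 -> 0 < lam 0 ->
  (forall k, rho k = 1 \/ rho k = sigma^-1) ->
  (forall k, lam k.+1 = rho k * lam k * sigma ^+ i k) ->
  (forall k, x k.+2 = resolvent A (lam k.+1)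
       (x k.+1 - lam k.+1 *: B (x k.+1) - lam k *: (B (x k.+1) - B (x k)))) ->
  (forall k, lam k.+1 * enorm (B (x k.+2) - B (x k.+1))
               <= delta / 2 * enorm (x k.+2 - x k.+1)) ->
  (forall k (j : nat), (j < i k)%N ->
     let mu := rho k * lam k * sigma ^+ j in
     let y := resolvent A mu
       (x k.+1 - mu *: B (x k.+1) - lam k *: (B (x k.+1) - B (x k))) in
     ~ (mu * enorm (B y - B (x k.+1)) <= delta / 2 * enorm (y - x k.+1))) ->
  exists2 p : 'rV[R]_n, zeros_sum A B p & x @ \oo --> p.
Proof.
move=> Amax Bmono Blip [z [u0 Au0 hu0]] Hd Hs Hl0 Hrho Hlam Hx Hls Hfail.
have Zz : iszero A B z.
  have E : u0 = - B z by rewrite -(addrK (B z) u0) hu0 sub0r.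
  by rewrite /iszero -E.
have /choice [u Hu] := incl Amax Hs Hl0 Hrho Hlam Hx.
set R1v := R1 B delta x lam z.
have [L1 L1p HL1] := lip_ball Blip z R1v.
have [L2 L2p HL2] := lip_ball Blip z (R2 B delta x lam z L1).
have Kx : forall k, (0 <= k)%N -> [set y | enorm (y - z) <= R1v] (x k).
  move=> k _ /=; eapply x_bound; eassumption.
have [p Kp Hp] := cluster_seq (compact_ball_e (c:=z) (r:=R1v)) Kx.
exists p.
  exists (- B p); last by rewrite addNr.
  exact: (p_zero Amax Bmono Blip Hd Hs Hl0 Hrho Hlam Hls Hu Zz L1p HL1 L2p HL2 Hfail Hp).
exact: (conv Amax Bmono Blip Hd Hs Hl0 Hrho Hlam Hls Hu Zz L1p HL1 L2p HL2 Hfail Hp).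
Qed.
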